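(* Let $\alpha,\beta,\gamma>0$ with $\alpha<1/5-\gamma$, $\delta<1/2$, and $x_0,y\in\mathcal D(\delta)$ with $\|x_0-y\|\le\frac45r_\delta$ lying on different sides of a barrier $B_i$, $i\ge1$. Let $X$ be the snapping-out Brownian motion with $X_0=x_0$, and suppose the event $$\mathcal A:=\Big\{\mathcal E_1<\alpha r_\delta,\ \mathcal E_2>\beta r_\delta,\ \|W_t-(t/r_\delta^2)(y-x_0)\|\le\gamma r_\delta\ \forall t\le r_\delta^2\Big\}$$ occurs. Then there exists $t\le r_\delta^2$ with $s_i(L^{(i)}_t)\ne s_i(0)$.
   Context: Setting. $D\subseteq\mathbb R^2$ is the closure of a bounded open set $D_0$; $D$ is connected and simply connected, with $C^\infty$ boundary $B_0:=\partial D$, a simple closed curve. $B_1,\dots,B_m\subseteq D_0$ are $C^\infty$ simple closed curves with $B_i\cap B_j=\emptyset$ for $i\neq j$ ($0\le i,j\le m$). For each $i$, the positive side of $B_i$ is the closure of the bounded component of $\mathbb R^2\setminus B_i$, the negative side the closure of the unbounded component (points of $B_i$ lie on both sides); $\vec n_i$ is the unit normal field on $B_i$ pointing into the bounded component. Fix $\lambda_i^\pm>0$. Let $W_t$ be a standard planar Wiener process and, independently, $s_1,\dots,s_m$ independent càdlàg Markov chains on $\{-1,+1\}$, $s_i$ jumping from $-1$ to $+1$ at rate $\lambda_i^+$ and from $+1$ to $-1$ at rate $\lambda_i^-$; $s_0\equiv+1$. A snapping-out Brownian motion is a family of continuous processes $X_t\in D$, $L^{(i)}_t\ge0$ such that a.s.: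 (i) $dX_t=dW_t+\sum_{i=0}^m s_i(L^{(i)}_t)\vec n_i(X_t)\mathbf 1\{X_t\in B_i\}dL^{(i)}_t$; (ii) $L^{(i)}$ nondecreasing, $L^{(i)}_0=0$, $L^{(i)}_t=\int_0^t\mathbf 1\{X_r\in B_i\}dL^{(i)}_r$; (iii) $s_i(L^{(i)}_t)=+1$ (resp. $-1$) implies $X_t$ is on the positive (resp. negative) side of $B_i$. Here $s_i(0)$ is $+1$ if $x_0$ is on the positive side of $B_i$ and $-1$ otherwise. Parameters: $\lambda_{\max}=\max\lambda_j^\pm$; $\kappa$ maximal unsigned curvature of $B_0,\dots,B_m$; $\rho:=\sup\{r\ge0:\mathsf B(x,r')\cap\bigcup_jB_j\text{ connected }\forall r'\le r,\ x\in D\}$ ($\mathsf B$ = open ball); $r_\delta:=\delta\min\{1/\kappa,1/\lambda_{\max},\rho\}$; $\mathcal D(\delta):=\{x\in D:\|x-z\|\ge r_\delta/5\ \forall z\in\bigcup_jB_j\}$. Also $\mathcal E_1:=\inf\{t\ge0:s_i(t)\ne s_i(0)\}$ and $\mathcal E_2:=\inf\{t\ge\mathcal E_1:s_i(t)\ne s_i(\mathcal E_1)\}-\mathcal E_1$. *)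

(* Defs.v *)
From HB Require Import structures.
From mathcomp Require Import all_boot all_order all_algebra.
From mathcomp Require Import all_classical all_reals all_analysis.
Set Implicit Arguments. Unset Strict Implicit. Unset Printing Implicit Defensive.
Import Order.TTheory GRing.Theory Num.Theory.
Import numFieldNormedType.Exports.
Local Open Scope classical_set_scope.
Local Open Scope ring_scope.

Section Defs.
Context {R : realType}.

(** ** Plane geometry on R x R (product topology = Euclidean topology) *)
Definition pt := (R * R)%type.
Definition padd (p q : pt) : pt := (p.1 + q.1, p.2 + q.2).
Definition psub (p q : pt) : pt := (p.1 - q.1, p.2 - q.2).
Definition pscale (a : R) (p : pt) : pt := (a * p.1, a * p.2).
Definition pdot (p q : pt) : R := p.1 * q.1 + p.2 * q.2.
Definition pnorm (p : pt) : R := Num.sqrt (p.1 ^+ 2 + p.2 ^+ 2).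
Definition pdist (p q : pt) : R := pnorm (psub p q).
Definition pball (x : pt) (r : R) : set pt := [set z | pdist z x < r].
Definition ebounded (A : set pt) : Prop :=
  exists M : R, forall p, A p -> pnorm p <= M.

Definition inside (B : set pt) : set pt :=
  [set p | ~ B p /\ ebounded (connected_component (~` B) p)].
Definition outside (B : set pt) : set pt :=
  [set p | ~ B p /\ ~ ebounded (connected_component (~` B) p)].
Definition pos_side (B : set pt) : set pt := closure (inside B).
Definition neg_side (B : set pt) : set pt := closure (outside B).

Definition bdry (A : set pt) : set pt := closure A `\` interior A.

Definition smooth_fun (f : R -> R) : Prop :=
  forall (n : nat) (x : R), derivable (derive1n n f) x 1.

Definition cx (c : R -> pt) : R -> R := fun t => (c t).1.
Definition cy (c : R -> pt) : R -> R := fun t => (c t).2.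

(** c is a 1-periodic, C^oo, regular parametrization, injective on [0,1):
    its range is a C^oo simple closed curve *)
Definition smooth_simple_closed_param (c : R -> pt) : Prop :=
  [/\ smooth_fun (cx c), smooth_fun (cy c),
      (forall t, c (t + 1) = c t),
      (forall a b, 0 <= a < 1 -> 0 <= b < 1 -> c a = c b -> a = b) &
      (forall t, (derive1 (cx c) t) ^+ 2 + (derive1 (cy c) t) ^+ 2 != 0)].

Definition tangent (c : R -> pt) (t : R) : pt := (derive1 (cx c) t, derive1 (cy c) t).

Definition ucurv (c : R -> pt) (t : R) : R :=
  `| derive1 (cx c) t * derive1n 2 (cy c) t - derive1 (cy c) t * derive1n 2 (cx c) t |
  / (Num.sqrt ((derive1 (cx c) t) ^+ 2 + (derive1 (cy c) t) ^+ 2)) ^+ 3.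

Definition inward_unit_normal (c : R -> pt) (nv : pt -> pt) : Prop :=
  forall t, let z := c t in
  [/\ pnorm (nv z) = 1, pdot (nv z) (tangent c t) = 0 &
      (exists2 e0 : R, 0 < e0 &
        forall e, 0 < e < e0 -> inside (range c) (padd z (pscale e (nv z))))].

Definition Bunion (m : nat) (c : nat -> R -> pt) : set pt :=
  [set z | exists2 j, (j <= m)%N & range (c j) z].

Definition unit_itv : set R := [set t | 0 <= t <= 1].
Definition unit_sq : set (R * R) := [set q | 0 <= q.1 <= 1 /\ 0 <= q.2 <= 1].
Definition simply_connected (D : set pt) : Prop :=
  (forall x y, D x -> D y -> exists p : R -> pt,
      [/\ {within unit_itv, continuous p}, (forall t, unit_itv t -> D (p t)),
          p 0 = x & p 1 = y]) /\
  (forall p : R -> pt, {within unit_itv, continuous p} ->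
      (forall t, unit_itv t -> D (p t)) -> p 0 = p 1 ->
      exists H : R * R -> pt,
      [/\ {within unit_sq, continuous H},
          (forall q, unit_sq q -> D (H q)),
          (forall t, unit_itv t -> H (t, 0) = p t /\ H (t, 1) = p 0) &
          (forall u, unit_itv u -> H (0, u) = p 0 /\ H (1, u) = p 0)]).

Definition kappa (m : nat) (c : nat -> R -> pt) : R :=
  sup [set k | exists j t, (j <= m)%N /\ k = ucurv (c j) t].
Definition lambda_max (m : nat) (lp lm : nat -> R) : R :=
  \big[Num.max/0]_(1 <= j < m.+1) Num.max (lp j) (lm j).
Definition rho (D : set pt) (m : nat) (c : nat -> R -> pt) : R :=
  sup [set r | 0 <= r /\ forall r' x, r' <= r -> D x ->
                 connected (pball x r' `&` Bunion m c)].
Definition r_delta (delta kap lmax rh : R) : R :=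
  delta * Num.min (Num.min kap^-1 lmax^-1) rh.
Definition Ddelta (D : set pt) (m : nat) (c : nat -> R -> pt) (r : R) : set pt :=
  [set x | D x /\ forall z, Bunion m c z -> r / 5 <= pdist x z].

Definition cadlag (f : R -> R) : Prop :=
  forall t, 0 <= t ->
    f @ at_right t --> f t /\ (0 < t -> cvg (f @ at_left t)).

Definition nonneg_time : set R := [set t | 0 <= t].

(** E_1 and E_2 (extended-real valued; inf of the empty set = +oo) *)
Definition E1 (s : R -> R) : \bar R :=
  ereal_inf [set t%:E | t in [set t | 0 <= t /\ s t != s 0]].
Definition E2 (s : R -> R) : \bar R :=
  let e := fine (E1 s) in
  let I := ereal_inf [set t%:E | t in [set t | e <= t /\ s t != s e]] in
  (I - E1 s)%E.

Definition stieltjes (f : R -> R) : {measure set (measurableTypeR R) -> \bar R} :=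
  match pselect (nondecreasing f /\ right_continuous f) with
  | left h => lebesgue_stieltjes_measure
                (HB.pack f (isCumulative.Build R _ R f (proj1 h) (proj2 h)))
  | right _ => mzero
  end.

Definition ext0 (L : R -> R) : R -> R := fun t => L (Num.max t 0).

Definition LSint (L : R -> R) (g : R -> R) (t : R) : R :=
  Rintegral (stieltjes (ext0 L)) `[0, t] g.
Definition LSintv (L : R -> R) (g : R -> pt) (t : R) : pt :=
  (LSint L (fun r => (g r).1) t, LSint L (fun r => (g r).2) t).

Definition ind (A : set pt) (z : pt) : R := if `[< A z >] then 1 else 0.

(** pathwise definition of a snapping-out Brownian motion (conditions
    (i)-(iii)) driven by the Wiener path W and the chain paths s *)
Definition snapping_out (m : nat) (c : nat -> R -> pt) (nv : nat -> pt -> pt)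
    (D : set pt) (x0 : pt) (W : R -> pt) (s : nat -> R -> R)
    (X : R -> pt) (L : nat -> R -> R) : Prop :=
  [/\ [/\ {within nonneg_time, continuous X},
          (forall t, 0 <= t -> D (X t)) &
          (forall j, (j <= m)%N -> {within nonneg_time, continuous (L j)})],
      (forall t, 0 <= t ->
         X t = padd x0 (padd (W t)
           (\big[padd/(0, 0)]_(j < m.+1)
              LSintv (L j) (fun r => pscale (s j (L j r) * ind (range (c j)) (X r))
                                            (nv j (X r))) t))),
      (forall j, (j <= m)%N ->
         [/\ ({in nonneg_time &, {homo L j : a b / a <= b}}), L j 0 = 0 &
             (forall t, 0 <= t -> L j t = LSint (L j) (fun r => ind (range (c j)) (X r)) t)]) &
      (forall j t, (j <= m)%N -> 0 <= t ->
         (s j (L j t) = 1 -> pos_side (range (c j)) (X t)) /\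
         (s j (L j t) = -1 -> neg_side (range (c j)) (X t)))].

End Defs.

(* Main.v *)
Require Import Defs.
Set Implicit Arguments. Unset Strict Implicit.
From HB Require Import structures.
From mathcomp Require Import all_boot all_order all_algebra.
From mathcomp Require Import all_classical all_reals all_analysis.
From mathcomp Require Import ring lra.
Import Order.TTheory GRing.Theory Num.Theory.
Import numFieldNormedType.Exports.
Local Open Scope classical_set_scope.
Local Open Scope ring_scope.

Lemma pnorm_ge0 {R : realType} (p : @pt R) : 0 <= pnorm p.
Proof. exact: sqrtr_ge0. Qed.

Lemma pnorm_sq {R : realType} (p : @pt R) : pnorm p ^+ 2 = p.1 ^+ 2 + p.2 ^+ 2.
Proof. by rewrite /pnorm sqr_sqrtr // addr_ge0 // sqr_ge0. Qed.

Lemma pnorm_leP {R : realType} (p : @pt R) M : 0 <= M ->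
  p.1 ^+ 2 + p.2 ^+ 2 <= M ^+ 2 -> pnorm p <= M.
Proof.
move=> M0 h; have := pnorm_sq p; have := pnorm_ge0 p.
nra.
Qed.

Lemma pnorm_geP {R : realType} (p : @pt R) M :
  pnorm p <= M -> p.1 ^+ 2 + p.2 ^+ 2 <= M ^+ 2.
Proof.
move=> h; have := pnorm_sq p; have := pnorm_ge0 p.
nra.
Qed.

Lemma pdot_le {R : realType} (u v : @pt R) : pdot u v <= pnorm u * pnorm v.
Proof.
have := pnorm_sq u; have := pnorm_ge0 u; have := pnorm_sq v; have := pnorm_ge0 v.
rewrite /pdot; set a := pnorm u; set b := pnorm v => b0 hb a0 ha.
have : (u.1 * v.1 + u.2 * v.2) ^+ 2 <= (a * b) ^+ 2.
  rewrite exprMn ha hb; have := sqr_ge0 (u.1 * v.2 - u.2 * v.1). nra.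
have : 0 <= a * b by exact: mulr_ge0.
nra.
Qed.

Lemma pnorm_triangle {R : realType} (a b : @pt R) :
  pnorm (padd a b) <= pnorm a + pnorm b.
Proof.
apply: pnorm_leP; first by rewrite addr_ge0 // pnorm_ge0.
have := pdot_le a b; rewrite /pdot /padd /= => h.
have := pnorm_sq a; have := pnorm_sq b; nra.
Qed.

Lemma pnorm_scale {R : realType} (l : R) (p : @pt R) :
  pnorm (pscale l p) = `|l| * pnorm p.
Proof.
rewrite /pnorm /pscale /= !exprMn -mulrDr sqrtrM ?sqr_ge0 // sqrtr_sqr //.
Qed.

Lemma pnorm_opp {R : realType} (p : @pt R) : pnorm (psub (0,0) p) = pnorm p.
Proof. by rewrite /pnorm /psub /= !sub0r !sqrrN. Qed.

Lemma pdistC {R : realType} (p q : @pt R) : pdist p q = pdist q p.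
Proof.
by rewrite /pdist /pnorm /psub /= -(sqrrN (p.1 - q.1)) -(sqrrN (p.2 - q.2)) !opprB.
Qed.

Lemma pdist_triangle {R : realType} (p q r : @pt R) :
  pdist p r <= pdist p q + pdist q r.
Proof.
rewrite /pdist; have -> : psub p r = padd (psub p q) (psub q r).
  by rewrite /psub /padd /=; congr (_, _); ring.
exact: pnorm_triangle.
Qed.

Lemma pnorm_comp1 {R : realType} (p : @pt R) : `|p.1| <= pnorm p.
Proof.
have := pnorm_sq p; have := pnorm_ge0 p.
have := normr_ge0 p.1; have := real_normK (num_real p.1).
nra.
Qed.
Lemma pnorm_comp2 {R : realType} (p : @pt R) : `|p.2| <= pnorm p.
Proof.
have := pnorm_sq p; have := pnorm_ge0 p.
have := normr_ge0 p.2; have := real_normK (num_real p.2).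
nra.
Qed.

Lemma pnorm_by_dot {R : realType} (v : @pt R) M :
  (forall u : pt, u.1 ^+ 2 + u.2 ^+ 2 <= 1 -> pdot u v <= M) -> pnorm v <= M.
Proof.
move=> h; have n0 := pnorm_ge0 v.
have [->|vn] := eqVneq (pnorm v) 0.
  by have := h (0, 0); rewrite /pdot /= !mul0r add0r expr0n /= addr0 ler01; apply.
have np : 0 < pnorm v by rewrite lt_def vn n0.
have := h (v.1 / pnorm v, v.2 / pnorm v).
have hs := pnorm_sq v.
have -> : pdot (v.1 / pnorm v, v.2 / pnorm v) v = pnorm v.
  rewrite /pdot /= mulrC (mulrC (v.2 / _)) !mulrA -mulrDl -!expr2 -hs.
  by rewrite expr2 mulrK // unitfE.
apply; rewrite /= !expr_div_n -mulrDl -hs divff // expf_neq0 //.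
Qed.

Lemma pnorm_le_sum {R : realType} (p : @pt R) : pnorm p <= `|p.1| + `|p.2|.
Proof.
apply: pnorm_leP; first by rewrite addr_ge0.
have := real_normK (num_real p.1); have := real_normK (num_real p.2).
have := normr_ge0 p.1; have := normr_ge0 p.2; nra.
Qed.

Lemma pball_nbhs {R : realType} (p : @pt R) r : 0 < r -> nbhs p (pball p r).
Proof.
move=> r0; apply: (filterS _ (nbhsx_ballx p (r / 2) _)); last by rewrite divr_gt0.
move=> q [/= h1 h2].
rewrite /ball /= in h1 h2.
rewrite /pball /pdist /=; apply: le_lt_trans (pnorm_le_sum _) _.
rewrite /psub /= distrC (distrC q.2); lra.
Qed.

Lemma closure_pball {R : realType} (A : set (@pt R)) p r : closure A p -> 0 < r ->
  exists q, A q /\ pdist q p < r.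
Proof.
move=> cl r0; have [q [Aq bq]] := cl _ (@pball_nbhs _ p r r0).
by exists q.
Qed.

Definition seg {R : realType} (p q : @pt R) : set pt :=
  [set padd p (pscale l (psub q p)) | l in `[0, 1]%classic].

Lemma seg_connected {R : realType} (p q : @pt R) : connected (seg p q).
Proof.
apply: connected_continuous_connected; first exact: segment_connected.
apply: continuous_subspaceT => l.
rewrite /padd /pscale /=.
rewrite /continuous_at /=. apply: (@cvg_pair _ R R (nbhs l) (nbhs _) (nbhs _) _ _ _ (fun l => p.1 + l * (q.1 - p.1)) (fun l => p.2 + l * (q.2 - p.2))).
  by apply: cvgD; [exact: cvg_cst | apply: cvgM; [exact: cvg_id | exact: cvg_cst]].
by apply: cvgD; [exact: cvg_cst | apply: cvgM; [exact: cvg_id | exact: cvg_cst]].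
Qed.

Lemma seg_start {R : realType} (p q : @pt R) : seg p q p.
Proof.
exists 0; first by rewrite /= in_itv /= lexx ler01.
by rewrite /padd /pscale !mul0r !addr0; case: p.
Qed.

Lemma seg_end {R : realType} (p q : @pt R) : seg p q q.
Proof.
exists 1; first by rewrite /= in_itv /= lexx ler01.
by rewrite /padd /pscale /psub !mul1r /=; case: p; case: q => a b c d /=; congr (_, _); ring.
Qed.

Lemma seg_dist {R : realType} (p q z : @pt R) : seg p q z -> pdist z p <= pdist q p.
Proof.
case=> l; rewrite /= in_itv /= => /andP[l0 l1] <-.
rewrite /pdist.
have -> : psub (padd p (pscale l (psub q p))) p = pscale l (psub q p).
  by rewrite /psub /padd /pscale /=; congr (_, _); ring.
rewrite pnorm_scale ger0_norm //; have := pnorm_ge0 (psub q p); nra.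
Qed.

Lemma pball_seg {R : realType} (p z : @pt R) r : pdist z p < r -> seg p z `<=` pball p r.
Proof. by move=> h w /seg_dist hw; rewrite /pball; apply: le_lt_trans hw h. Qed.

Lemma pdist_self {R : realType} (p : @pt R) : pdist p p = 0.
Proof. by rewrite /pdist /pnorm /psub !subrr expr0n /= addr0 sqrtr0. Qed.

Lemma free_ball_comp {R : realType} (B : set (@pt R)) p r :
  (forall z, pdist z p < r -> ~ B z) ->
  forall z, pdist z p < r -> connected_component (~` B) p z.
Proof.
move=> fr z hz.
have sub : seg p z `<=` ~` B.
  by move=> w /(pball_seg hz) hw; apply: fr.
exact: (connected_component_max (@seg_start _ p z) sub (@seg_connected _ p z) (@seg_end _ p z)).
Qed.

Lemma pos_free_inside {R : realType} (B : set (@pt R)) p r : 0 < r ->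
  (forall z, pdist z p < r -> ~ B z) -> pos_side B p -> inside B p.
Proof.
move=> r0 fr ps.
have [q [[nBq bq] dq]] := closure_pball ps r0.
have cpq := free_ball_comp fr dq.
split; first by apply: fr; rewrite pdist_self.
by rewrite (same_connected_component cpq).
Qed.

Lemma neg_free_outside {R : realType} (B : set (@pt R)) p r : 0 < r ->
  (forall z, pdist z p < r -> ~ B z) -> neg_side B p -> outside B p.
Proof.
move=> r0 fr ps.
have [q [[nBq bq] dq]] := closure_pball ps r0.
have cpq := free_ball_comp fr dq.
split; first by apply: fr; rewrite pdist_self.
by rewrite (same_connected_component cpq).
Qed.

Lemma crossing {R : realType} (B : set (@pt R)) x y :
  inside B x -> outside B y -> exists2 z, seg x y z & B z.
Proof.
move=> [nBx bx] [nBy by_].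
apply: contrapT => hn.
have sub : seg x y `<=` ~` B by move=> w sw Bw; apply: hn; exists w.
have cxy := connected_component_max (@seg_start _ x y) sub (@seg_connected _ x y) (@seg_end _ x y).
by apply: by_; rewrite -(same_connected_component cxy).
Qed.

Lemma pdist_eq0 {R : realType} (p q : @pt R) : pdist p q = 0 -> p = q.
Proof.
move=> h; have h1 := pnorm_comp1 (psub p q); have h2 := pnorm_comp2 (psub p q).
rewrite /pdist in h; rewrite h /psub /= in h1 h2.
have e1 : p.1 - q.1 = 0 by apply/normr0_eq0/eqP; rewrite eq_le h1 normr_ge0.
have e2 : p.2 - q.2 = 0 by apply/normr0_eq0/eqP; rewrite eq_le h2 normr_ge0.
move: e1 e2; clear; case: p; case: q => a b c d /= /eqP; rewrite subr_eq0 => /eqP -> /eqP.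
by rewrite subr_eq0 => /eqP ->.
Qed.

Lemma pt_hausdorff {R : realType} : hausdorff_space (@pt R).
Proof.
move=> p q cl; apply: contrapT => npq.
have d0 : 0 < pdist p q.
  rewrite lt_def /pdist pnorm_ge0 andbT; apply/eqP => h; apply: npq.
  exact: pdist_eq0.
have two : (0:R) < 2 by [].
have [z [zp zq]] := cl _ _ (pball_nbhs p (divr_gt0 d0 two))
                        (pball_nbhs q (divr_gt0 d0 two)).
move: zp zq; rewrite /pball /=.
have := pdist_triangle p z q; rewrite (pdistC p z) => h a b; have := ltrD a b; rewrite -splitr => h2; by have := le_lt_trans h h2; rewrite ltxx.
Qed.

Lemma smooth_continuous {R : realType} (f : R -> R) : smooth_fun f -> continuous f.
Proof.
move=> sf x; have := sf 0%N x => /derivable1_diffP/differentiable_continuous.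
by [].
Qed.

Lemma param_continuous {R : realType} (c : R -> @pt R) :
  smooth_simple_closed_param c -> continuous c.
Proof.
case=> sx sy _ _ _ t.
have -> : c = (fun t => (cx c t, cy c t)).
  by apply: funext => u; rewrite /cx /cy; case: (c u).
apply: (@cvg_pair _ R R (nbhs t) (nbhs _) (nbhs _) _ _ _ (cx c) (cy c)).
  exact: smooth_continuous.
exact: smooth_continuous.
Qed.

Lemma periodic_nat {R : realType} (c : R -> @pt R) :
  (forall t, c (t + 1) = c t) -> forall (n : nat) t, c (t + n%:R) = c t.
Proof.
move=> per; elim=> [|n IH] t; first by rewrite addr0.
by rewrite -natr1 addrA per IH.
Qed.

Lemma periodic_int {R : realType} (c : R -> @pt R) :
  (forall t, c (t + 1) = c t) -> forall (k : int) t, c (t + k%:~R) = c t.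
Proof.
move=> per [n|n] t.
  by rewrite -[(Posz n)%:~R]/(n%:R) periodic_nat.
rewrite NegzE mulrNz.
have := periodic_nat per n.+1 (t - n.+1%:R).
by rewrite subrK => <-.
Qed.

Lemma range_seg {R : realType} (c : R -> @pt R) :
  (forall t, c (t + 1) = c t) -> range c = c @` `[0, 1]%classic.
Proof.
move=> per; apply/seteqP; split => p [t _ <-]; last by exists t.
have := floor_itv t => /andP[f1 f2].
exists (t - (Num.floor t)%:~R).
  rewrite /= in_itv /= subr_ge0 f1 /=.
  rewrite lerBlDl; apply: ltW; move: f2; rewrite intrD //.
have := periodic_int per (Num.floor t) (t - (Num.floor t)%:~R).
by rewrite subrK.
Qed.

Lemma range_closed {R : realType} (c : R -> @pt R) :
  smooth_simple_closed_param c -> closed (range c).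
Proof.
move=> sc; have cc := param_continuous sc.
case: sc => _ _ per _ _.
rewrite (range_seg per); apply: compact_closed; first exact: pt_hausdorff.
apply: continuous_compact; last exact: segment_compact.
exact: continuous_subspaceT.
Qed.

Lemma closed_fin_union {R : realType} (F : nat -> set (@pt R)) n :
  (forall k, (k < n)%N -> closed (F k)) -> closed [set z | exists2 k, (k < n)%N & F k z].
Proof.
elim: n => [|n IH] h.
  have -> : [set z | exists2 k, (k < 0)%N & F k z] = set0.
    by apply/seteqP; split => z // [].
  exact: closed0.
have -> : [set z | exists2 k, (k < n.+1)%N & F k z] =
          [set z | exists2 k, (k < n)%N & F k z] `|` F n.
  apply/seteqP; split => z.
    by case=> k; rewrite ltnS leq_eqVlt => /orP[/eqP ->|kn Fz]; [right|left; exists k].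
  by case=> [[k kn Fz]|Fz]; [exists k => //; apply: ltnW|exists n].
apply: closedU; first by apply: IH => k kn; apply: h; apply: ltnW.
exact: h.
Qed.

Lemma no_other_barrier {R : realType} (m : nat) (c : nat -> R -> @pt R) i x r :
  (i <= m)%N ->
  (forall j, (j <= m)%N -> closed (range (c j))) ->
  (forall j k, (j <= m)%N -> (k <= m)%N -> j != k ->
     range (c j) `&` range (c k) = set0) ->
  connected (pball x r `&` Bunion m c) ->
  (exists p, pdist p x < r /\ range (c i) p) ->
  forall j z, (j <= m)%N -> j != i -> pdist z x < r -> ~ range (c j) z.
Proof.
move=> im cl disj con [p [px pi]] j z jm ji zx zj.
set K := pball x r `&` Bunion m c.
set Co := [set z | exists2 k, (k < m.+1)%N & (if k != i then range (c k) else set0) z].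
have clCo : closed Co.
  apply: closed_fin_union => k km; case: ifP => _; last exact: closed0.
  exact: cl.
have BK : K `&` range (c i) = K.
  apply: con.
  - by exists p; split => //; split => //; exists i.
  - exists (~` Co); first by rewrite openC.
    apply/seteqP; split => w.
      move=> [[wx [k km wk]] wi]; split; first by split => //; exists k.
      move=> [k' km' ]; case: ifP => // /negbTE k'i wk'.
      have := disj i k' im (ltnSE km') _; rewrite eq_sym k'i => /(_ isT).
      by move/seteqP => [+ _] => /(_ w (conj wi wk')).
    move=> [[wx [k km wk]] nCo]; split; first by split => //; exists k.
    case: (eqVneq k i) => [<- //|ki]; exfalso; apply: nCo; exists k; first by [].
    by rewrite ki.
  - by exists (range (c i)) => //; exact: cl.
have : K z by split => //; exists j.
rewrite -BK => -[_ zi].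
have := disj i j im jm; rewrite eq_sym ji => /(_ isT) /seteqP [+ _].
by move=> /(_ z (conj zi zj)).
Qed.

Import HBNNSimple.

Definition Jint {d} {T : measurableType d} {R : realType} (mu : {measure set T -> \bar R})
  (D : set T) (h : T -> R) : \bar R := (\int[mu]_(x in D) (h x)%:E)%E.

Lemma Jint_ge0 {d} {T : measurableType d} {R : realType} (mu : {measure set T -> \bar R})
  (D : set T) (h : T -> R) : (forall x, D x -> 0 <= h x) -> (0 <= Jint mu D h)%E.
Proof. by move=> h0; apply: integral_ge0 => x Dx; rewrite lee_fin h0. Qed.

Lemma Jint_le {d} {T : measurableType d} {R : realType} (mu : {measure set T -> \bar R})
  (D : set T) (h : T -> R) : measurable D -> (forall x, D x -> 0 <= h x <= 1) ->
  (Jint mu D h <= mu D)%E.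
Proof.
move=> mD h01; rewrite /Jint ge0_integralE; last first.
  by move=> x /h01 /andP[h0 _]; rewrite lee_fin.
apply: ge_ereal_sup => _ [s hs <-].
rewrite -(sintegral_indic mu D).
apply: (@le_sintegral _ _ _ mu s (indic_nnsfun R mD)) => x /=.
have := hs x; rewrite /patch measurable_realfun.mindicE; case: ifP => xD.
  by rewrite lee_fin => hh; apply: le_trans hh _; move: xD; rewrite inE => /h01 /andP[].
by have -> : (point : \bar R) = 0%E by []; rewrite lee_fin.
Qed.

Lemma Jint_fin {d} {T : measurableType d} {R : realType} (mu : {measure set T -> \bar R})
  (D : set T) (h : T -> R) M : measurable D -> mu D = M%:E ->
  (forall x, D x -> 0 <= h x <= 1) ->
  Jint mu D h = (fine (Jint mu D h))%:E /\ 0 <= fine (Jint mu D h) <= M.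
Proof.
move=> mD muD h01.
have J0 : (0 <= Jint mu D h)%E by apply: Jint_ge0 => x /h01 /andP[].
have J1 := Jint_le mu mD h01; rewrite muD in J1.
have fJ : Jint mu D h \is a fin_num by rewrite ge0_fin_numE // (le_lt_trans J1) // ltry.
split; first by rewrite fineK.
by rewrite fine_ge0 //= -lee_fin fineK.
Qed.

Lemma sint_le_Jint {d} {T : measurableType d} {R : realType} (mu : {measure set T -> \bar R})
  (D : set T) (h : T -> R) (s : {nnsfun T >-> R}) :
  (forall x, D x -> 0 <= h x) ->
  (forall x, ((s x)%:E <= ((fun x => (h x)%:E) \_ D) x)%E) ->
  (sintegral mu s <= Jint mu D h)%E.
Proof.
move=> h0 hs; rewrite /Jint ge0_integralE; last by move=> x /h0; rewrite lee_fin.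
by apply: ereal_sup_ubound; exists s.
Qed.

Lemma Jint_approx {d} {T : measurableType d} {R : realType} (mu : {measure set T -> \bar R})
  (D : set T) (h : T -> R) (x : \bar R) :
  (forall x, D x -> 0 <= h x) -> (x < Jint mu D h)%E ->
  exists2 s : {nnsfun T >-> R}, (forall y, ((s y)%:E <= ((fun x => (h x)%:E) \_ D) y)%E) &
     (x < sintegral mu s)%E.
Proof.
move=> h0; rewrite /Jint ge0_integralE; last by move=> y /h0; rewrite lee_fin.
by move=> /ereal_sup_gt [_ [s hs <-] lt]; exists s.
Qed.

Lemma Jint_superadd {d} {T : measurableType d} {R : realType} (mu : {measure set T -> \bar R})
  (D : set T) (h1 h2 : T -> R) M a b : measurable D -> mu D = M%:E ->
  0 <= a -> 0 <= b ->
  (forall x, D x -> 0 <= h1 x <= 1) -> (forall x, D x -> 0 <= h2 x <= 1) ->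
  (forall x, D x -> a * h1 x + b * h2 x <= 1) ->
  a * fine (Jint mu D h1) + b * fine (Jint mu D h2) <=
  fine (Jint mu D (fun x => a * h1 x + b * h2 x)).
Proof.
move=> mD muD a0 b0 h1b h2b h3b.
have h3b' : forall x, D x -> 0 <= a * h1 x + b * h2 x <= 1.
  move=> x Dx; rewrite h3b // andbT addr_ge0 // mulr_ge0 //.
    by case/andP: (h1b x Dx).
  by case/andP: (h2b x Dx).
have [E1 /andP[F1a F1b]] := Jint_fin mD muD h1b.
have [E2 /andP[F2a F2b]] := Jint_fin mD muD h2b.
have [E3 /andP[F3a F3b]] := Jint_fin mD muD h3b'.
apply/ler_addgt0Pr => e e0.
set e' := e / (a + b + 1).
have abp : 0 < a + b + 1 by rewrite ltr_wpDl // addr_ge0.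
have e'0 : 0 < e' by rewrite divr_gt0.
have ee : e' * (a + b + 1) = e by rewrite /e' divfK // gt_eqF.
have h10 : forall x, D x -> 0 <= h1 x by move=> x /h1b /andP[].
have h20 : forall x, D x -> 0 <= h2 x by move=> x /h2b /andP[].
have h30 : forall x, D x -> 0 <= a * h1 x + b * h2 x by move=> x /h3b' /andP[].
have [s1 hs1 lt1] : exists2 s : {nnsfun T >-> R},
    (forall y, ((s y)%:E <= ((fun x => (h1 x)%:E) \_ D) y)%E) &
    ((fine (Jint mu D h1) - e')%:E < sintegral mu s)%E.
  by apply: Jint_approx => //; rewrite {2}E1 lte_fin ltrBlDr ltrDl.
have [s2 hs2 lt2] : exists2 s : {nnsfun T >-> R},
    (forall y, ((s y)%:E <= ((fun x => (h2 x)%:E) \_ D) y)%E) &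
    ((fine (Jint mu D h2) - e')%:E < sintegral mu s)%E.
  by apply: Jint_approx => //; rewrite {2}E2 lte_fin ltrBlDr ltrDl.
have u1 := sint_le_Jint mu h10 hs1.
have u2 := sint_le_Jint mu h20 hs2.
set S := add_nnsfun (scale_nnsfun s1 a0) (scale_nnsfun s2 b0).
have key : (sintegral mu S <= Jint mu D (fun x => (a * h1 x + b * h2 x)%R))%E.
  apply: sint_le_Jint => // x; rewrite /S /patch /=.
  have := hs1 x; have := hs2 x; rewrite /patch; case: ifP => xD.
    rewrite !lee_fin => q2 q1; apply: lerD; exact: ler_wpM2l.
  have -> : (point : \bar R) = 0%E by [].
  rewrite !lee_fin => q2 q1.
  by rewrite -(addr0 0) lerD // mulr_ge0_le0.
have sE : sintegral mu S = (a%:E * sintegral mu s1 + b%:E * sintegral mu s2)%E.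
  by rewrite /S sintegralD /scale_nnsfun /= !sintegralrM.
have s10 := sintegral_ge0 mu s1.
have s20 := sintegral_ge0 mu s2.
have fs1 : sintegral mu s1 = (fine (sintegral mu s1))%:E.
  by rewrite fineK // ge0_fin_numE // (le_lt_trans u1) // E1 ltry.
have fs2 : sintegral mu s2 = (fine (sintegral mu s2))%:E.
  by rewrite fineK // ge0_fin_numE // (le_lt_trans u2) // E2 ltry.
move: key lt1 lt2 u1 u2; rewrite sE fs1 fs2 {1}E3 {1}E1 {1}E2 -!EFinM -EFinD !lte_fin !lee_fin.
set v1 := fine (sintegral mu s1); set v2 := fine (sintegral mu s2).
move=> key lt1 lt2 _ _.
have : a * fine (Jint mu D h1) <= a * v1 + a * e'.
  by rewrite -mulrDr ler_wpM2l // -lerBlDr ltW.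
have : b * fine (Jint mu D h2) <= b * v2 + b * e'.
  by rewrite -mulrDr ler_wpM2l // -lerBlDr ltW.
nra.
Qed.

Definition fpos {T} {R : realType} (g : T -> R) := fun x => Num.max (g x) 0.
Definition fneg {T} {R : realType} (g : T -> R) := fun x => Num.max (- g x) 0.

Lemma Rint_split {d} {T : measurableType d} {R : realType} (mu : {measure set T -> \bar R})
  (D : set T) (g : T -> R) :
  Rintegral mu D g = fine (Jint mu D (fpos g) - Jint mu D (fneg g))%E.
Proof.
rewrite /Rintegral integralE /Jint; congr (fine (_ - _)).
  by congr (integral _ _ _); apply: funext => x; rewrite funeposE /= EFin_max.
by congr (integral _ _ _); apply: funext => x; rewrite funenegE /= EFin_max.
Qed.

Lemma pos_le_norm {R : realType} (y : R) : 0 <= Num.max y 0 <= `|y|.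
Proof. by rewrite le_max lexx orbT /= ge_max ler_norm normr_ge0. Qed.
Lemma neg_le_norm {R : realType} (y : R) : 0 <= Num.max (- y) 0 <= `|y|.
Proof. by rewrite le_max lexx orbT /= ge_max -normrN ler_norm normr_ge0. Qed.

Lemma cs_abs {R : realType} (u1 u2 y1 y2 : R) : u1 ^+ 2 + u2 ^+ 2 <= 1 ->
  y1 ^+ 2 + y2 ^+ 2 <= 1 -> `|u1| * `|y1| + `|u2| * `|y2| <= 1.
Proof.
move=> hu hy.
have := real_normK (num_real u1); have := real_normK (num_real u2).
have := real_normK (num_real y1); have := real_normK (num_real y2).
have := normr_ge0 u1; have := normr_ge0 u2; have := normr_ge0 y1; have := normr_ge0 y2.
set A := `|u1|; set B := `|u2|; set P := `|y1|; set Q := `|y2|.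
move=> Q0 P0 B0 A0 eQ eP eB eA.
have h := sqr_ge0 (A * Q - B * P).
have : (A * P + B * Q) ^+ 2 <= 1 by nra.
have : 0 <= A * P + B * Q by rewrite addr_ge0 // mulr_ge0.
nra.
Qed.

Lemma abs_le1 {R : realType} (y1 y2 : R) : y1 ^+ 2 + y2 ^+ 2 <= 1 -> `|y1| <= 1.
Proof.
move=> h; have := real_normK (num_real y1); have := normr_ge0 y1.
set P := `|y1| => P0 eP; have := sqr_ge0 y2; nra.
Qed.

Lemma Rint_one_bound {d} {T : measurableType d} {R : realType} (mu : {measure set T -> \bar R})
  (D : set T) (g : T -> R) (M u : R) : measurable D -> mu D = M%:E ->
  (forall x, D x -> `|g x| <= 1) ->
  u * Rintegral mu D g <= `|u| * fine (Jint mu D (if 0 <= u then fpos g else fneg g)).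
Proof.
move=> mD muD gb.
have pb : forall x, D x -> 0 <= fpos g x <= 1.
  move=> x Dx; have /andP[a b] := pos_le_norm (g x).
  by rewrite /fpos a (le_trans b) // gb.
have nb : forall x, D x -> 0 <= fneg g x <= 1.
  move=> x Dx; have /andP[a b] := neg_le_norm (g x).
  by rewrite /fneg a (le_trans b) // gb.
have [Ep /andP[p0 _]] := Jint_fin mD muD pb.
have [En /andP[n0 _]] := Jint_fin mD muD nb.
rewrite Rint_split Ep En -EFinB /=.
case: ifP => u0.
  rewrite ger0_norm // mulrBr lerBlDr lerDl mulr_ge0 //.
rewrite ltr0_norm ?ltNge ?u0 //.
have : u < 0 by rewrite ltNge u0.
nra.
Qed.

Lemma Rint_dot_bound {d} {T : measurableType d} {R : realType} (mu : {measure set T -> \bar R})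
  (D : set T) (g1 g2 : T -> R) (M u1 u2 : R) : measurable D -> mu D = M%:E ->
  (forall x, D x -> g1 x ^+ 2 + g2 x ^+ 2 <= 1) -> u1 ^+ 2 + u2 ^+ 2 <= 1 ->
  u1 * Rintegral mu D g1 + u2 * Rintegral mu D g2 <= M.
Proof.
move=> mD muD gb ub.
have gi1 : forall x, D x -> `|g1 x| <= 1 by move=> x /gb /abs_le1.
have gi2 : forall x, D x -> `|g2 x| <= 1.
  by move=> x /gb; rewrite addrC => /abs_le1.
have b1 := Rint_one_bound u1 mD muD gi1.
have b2 := Rint_one_bound u2 mD muD gi2.
set h1 := (if 0 <= u1 then fpos g1 else fneg g1) in b1.
set h2 := (if 0 <= u2 then fpos g2 else fneg g2) in b2.
have hb1 : forall x, D x -> 0 <= h1 x <= `|g1 x|.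
  by move=> x Dx; rewrite /h1; case: ifP => _; [exact: pos_le_norm|exact: neg_le_norm].
have hb2 : forall x, D x -> 0 <= h2 x <= `|g2 x|.
  by move=> x Dx; rewrite /h2; case: ifP => _; [exact: pos_le_norm|exact: neg_le_norm].
have hb1' : forall x, D x -> 0 <= h1 x <= 1.
  by move=> x Dx; case/andP: (hb1 x Dx) => -> /le_trans; apply; apply: gi1.
have hb2' : forall x, D x -> 0 <= h2 x <= 1.
  by move=> x Dx; case/andP: (hb2 x Dx) => -> /le_trans; apply; apply: gi2.
have h3 : forall x, D x -> `|u1| * h1 x + `|u2| * h2 x <= 1.
  move=> x Dx; apply: le_trans (cs_abs ub (gb x Dx)).
  case/andP: (hb1 x Dx) => _ q1; case/andP: (hb2 x Dx) => _ q2.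
  by apply: lerD; apply: ler_wpM2l.
have := Jint_superadd mD muD (normr_ge0 u1) (normr_ge0 u2) hb1' hb2' h3.
have h3' : forall x, D x -> 0 <= `|u1| * h1 x + `|u2| * h2 x <= 1.
  move=> x Dx; rewrite h3 // andbT addr_ge0 // mulr_ge0 //.
    by case/andP: (hb1 x Dx).
  by case/andP: (hb2 x Dx).
have [_ /andP[_ F3]] := Jint_fin mD muD h3'.
move=> S; apply: le_trans F3; apply: le_trans S.
exact: lerD.
Qed.

Lemma within_eps {R : realType} (f : R -> R) (A : set R) a :
  {within A, continuous f} -> A a ->
  forall e, 0 < e -> exists2 d, 0 < d & forall s, A s -> `|a - s| < d -> `|f a - f s| < e.
Proof.
move=> /subspace_continuousP /[apply] /cvgrPdist_lt h e e0.
have := h e e0; rewrite /within /= => /nbhs_ballP [dd dd0 H].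
by exists dd => // s As asd; apply: H => //; rewrite /ball /=.
Qed.

Lemma within_comp1 {R : realType} (X : R -> @pt R) (A : set R) :
  {within A, continuous X} -> {within A, continuous (fun t => (X t).1)}.
Proof.
move/subspace_continuousP => hX; apply/subspace_continuousP => x Ax.
exact: (cvg_comp _ _ (hX x Ax) cvg_fst).
Qed.

Lemma within_comp2 {R : realType} (X : R -> @pt R) (A : set R) :
  {within A, continuous X} -> {within A, continuous (fun t => (X t).2)}.
Proof.
move/subspace_continuousP => hX; apply/subspace_continuousP => x Ax.
exact: (cvg_comp _ _ (hX x Ax) cvg_snd).
Qed.

Lemma within_eps_pt {R : realType} (X : R -> @pt R) (A : set R) a :
  {within A, continuous X} -> A a ->
  forall e, 0 < e -> exists2 d, 0 < d & forall s, A s -> `|a - s| < d -> pdist (X s) (X a) < e.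
Proof.
move=> cX Aa e e0.
have e20 : 0 < e / 2 by rewrite divr_gt0.
have [d1 d10 H1] := within_eps (within_comp1 cX) Aa e20.
have [d2 d20 H2] := within_eps (within_comp2 cX) Aa e20.
exists (Num.min d1 d2); first by rewrite lt_min d10 d20.
move=> s As; rewrite lt_min => /andP[s1 s2].
have q1 := H1 s As s1; have q2 := H2 s As s2.
rewrite /pdist; apply: le_lt_trans (pnorm_le_sum _) _ => /=.
rewrite /psub /= (distrC (X s).1) (distrC (X s).2).
by rewrite (splitr e) ltrD.
Qed.

Lemma max0_dist {R : realType} (x t : R) : `|Num.max x 0 - Num.max t 0| <= `|x - t|.
Proof.
case: (lerP x 0) => hx; case: (lerP t 0) => ht.
- by rewrite subrr normr0.
- rewrite sub0r normrN (ger0_norm (ltW ht)) distrC ger0_norm; lra.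
- rewrite subr0 (ger0_norm (ltW hx)) ger0_norm; lra.
- by [].
Qed.

Lemma ext0_cont {R : realType} (L : R -> R) :
  {within nonneg_time, continuous L} -> continuous (ext0 L).
Proof.
move=> cL x; apply/cvgrPdist_lt => e e0.
have A0 : nonneg_time (Num.max x 0) by rewrite /nonneg_time /= le_max lexx orbT.
have [d d0 H] := within_eps cL A0 e0.
apply/nbhs_ballP; exists d => // t; rewrite /ball /= => xt.
rewrite /ext0; apply: H; first by rewrite /nonneg_time /= le_max lexx orbT.
exact: le_lt_trans (max0_dist x t) xt.
Qed.

Lemma ext0_nd {R : realType} (L : R -> R) :
  {in nonneg_time &, {homo L : a b / a <= b}} -> nondecreasing (ext0 L).
Proof.
move=> hL a b ab; rewrite /ext0; apply: hL.
- by rewrite inE /nonneg_time /= le_max lexx orbT.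
- by rewrite inE /nonneg_time /= le_max lexx orbT.
by rewrite ge_max !le_max ab lexx !orbT.
Qed.

Lemma lsm_oc {R : realType} (f : cumulative R R) a b : a < b ->
  lebesgue_stieltjes_measure f `]a, b]%classic = (f b - f a)%:E.
Proof.
move=> ab; rewrite /lebesgue_stieltjes_measure/= /measure_extension/=.
rewrite measurable_mu_extE /=; last exact: is_ocitv.
by rewrite wlength_itv /= lte_fin ab EFinB.
Qed.

Lemma stieltjes_oc {R : realType} (L : R -> R) a b :
  {within nonneg_time, continuous L} -> {in nonneg_time &, {homo L : a b / a <= b}} ->
  a < b -> stieltjes (ext0 L) `]a, b]%classic = (ext0 L b - ext0 L a)%:E.
Proof.
move=> cL hL ab; rewrite /stieltjes; case: pselect => [h|[]]; last first.
  by split; [exact: ext0_nd | apply: right_continuousW; exact: ext0_cont].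
exact: lsm_oc.
Qed.

Lemma stieltjes_bound {R : realType} (L : R -> R) t :
  {within nonneg_time, continuous L} -> {in nonneg_time &, {homo L : a b / a <= b}} ->
  L 0 = 0 -> 0 <= t ->
  exists M, stieltjes (ext0 L) `[0, t]%classic = M%:E /\ 0 <= M <= L t.
Proof.
move=> cL hL L0 t0.
have m1t : -1 < t by apply: lt_le_trans t0; exact: ltrN10.
have oc : stieltjes (ext0 L) `]-1, t]%classic = (L t)%:E.
  by rewrite (stieltjes_oc cL hL m1t) /ext0 (max_l t0) (max_r (ltW (@ltrN10 R))) L0 subr0.
have le : (stieltjes (ext0 L) `[0%R, t]%classic <= stieltjes (ext0 L) `](-1)%R, t]%classic)%E.
  apply: le_measure; rewrite ?inE; try exact: measurable_itv.
  move=> x; rewrite /= !in_itv /= => /andP[x0 ->]; rewrite andbT.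
  exact: lt_le_trans (@ltrN10 R) x0.
rewrite oc in le.
have ge := measure_ge0 (stieltjes (ext0 L)) `[0, t]%classic.
exists (fine (stieltjes (ext0 L) `[0, t]%classic)).
have fn : stieltjes (ext0 L) `[0, t]%classic \is a fin_num.
  by rewrite ge0_fin_numE // (le_lt_trans le) // ltry.
split; first by rewrite fineK.
by rewrite fine_ge0 //= -lee_fin fineK.
Qed.

Lemma LSintv_bound {R : realType} (L : R -> R) (g : R -> @pt R) t :
  {within nonneg_time, continuous L} -> {in nonneg_time &, {homo L : a b / a <= b}} ->
  L 0 = 0 -> 0 <= t -> (forall r, 0 <= r <= t -> pnorm (g r) <= 1) ->
  pnorm (LSintv L g t) <= L t.
Proof.
move=> cL hL L0 t0 gb.
have [M [muD /andP[M0 ML]]] := stieltjes_bound cL hL L0 t0.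
apply: le_trans ML; apply: pnorm_by_dot => u ub.
rewrite /pdot /LSintv /LSint /=.
have H := (@Rint_dot_bound _ _ _ (stieltjes (ext0 L)) `[0, t]%classic (fun r => (g r).1) (fun r => (g r).2) M u.1 u.2 (measurable_itv _) muD). apply: H => //.

move=> x; rewrite /= in_itv /= => xt.
have := pnorm_geP (gb x xt); by rewrite expr1n.
Qed.

Lemma LSint_zero {R : realType} (L : R -> R) (g : R -> R) t :
  (forall r, 0 <= r <= t -> g r = 0) -> LSint L g t = 0.
Proof.
move=> g0; rewrite /LSint /Rintegral integral0_eq //.
by move=> x; rewrite /= in_itv /= => /g0 ->.
Qed.

Lemma right_eps {R : realType} (s : R -> R) e : s @ at_right e --> s e ->
  exists2 d, 0 < d & forall u, e < u -> u < e + d -> `|s e - s u| < 1.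
Proof.
move/cvgrPdist_lt => /(_ 1 ltr01); rewrite /at_right /within /= => /nbhs_ballP [d d0 H].
exists d => // u eu ued; apply: H => //; rewrite /ball /= ltr0_norm ?subr_lt0 //.
by rewrite opprB ltrBlDl.
Qed.

Lemma pm1_eq {R : realType} (a b : R) : (a = 1 \/ a = -1) -> (b = 1 \/ b = -1) ->
  `|a - b| < 1 -> a = b.
Proof.
case=> ->; case=> -> //.
- rewrite opprK ger0_norm; lra.
- rewrite -opprD normrN ger0_norm; lra.
Qed.

Lemma E1_props {R : realType} (s : R -> R) x :
  cadlag s -> (forall t, 0 <= t -> s t = 1 \/ s t = -1) -> (E1 s < x%:E)%E ->
  exists e, [/\ E1 s = e%:E, 0 <= e, s e != s 0 & forall u, 0 <= u < e -> s u = s 0].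
Proof.
move=> cs pm.
set S := [set t | 0 <= t /\ s t != s 0].
have lb : (0 <= E1 s)%E.
  by apply: le_ereal_inf_tmp => _ [t [t0 _] <-]; rewrite lee_fin.
rewrite /E1 -/S => /ereal_inf_lt [_ [t0 [t00 st0] <-] _].
have ub : (E1 s <= t0%:E)%E by apply: ereal_inf_lbound; exists t0.
have fn : E1 s \is a fin_num by rewrite ge0_fin_numE // (le_lt_trans ub) // ltry.
set e := fine (E1 s).
have Ee : E1 s = e%:E by rewrite fineK.
have e0 : 0 <= e by rewrite fine_ge0.
have low : forall t, 0 <= t -> s t != s 0 -> e <= t.
  move=> t t0' st; rewrite -lee_fin -Ee; apply: ereal_inf_lbound; exists t => //.
have before : forall u, 0 <= u < e -> s u = s 0.
  move=> u /andP[u0 ue]; apply/eqP; apply: contraTT ue => hu.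
  by rewrite -leNgt; apply: low.
exists e; split => //.
apply/negP => /eqP see.
have [d d0 H] := right_eps (proj1 (cs e e0)).
have : ((e + d)%:E <= E1 s)%E.
  apply: le_ereal_inf_tmp => _ [t [t0' st] <-]; rewrite lee_fin.
  rewrite leNgt; apply/negP => ted; move/negP: st; apply; apply/eqP.
  case: (ltgtP t e) => [te|et|->] //.
  - by apply: before; rewrite t0' te.
  - rewrite -see; apply/esym/pm1_eq; [exact: pm | exact: pm | exact: H].
rewrite Ee lee_fin; lra.
Qed.

Lemma first_exit {R : realType} (X : R -> @pt R) x0 rd T :
  {within nonneg_time, continuous X} -> 
  (forall t, 0 <= t <= T -> (forall u, 0 <= u < t -> pdist (X u) x0 < rd) ->
     pdist (X t) x0 < rd) ->
  forall t, 0 <= t <= T -> pdist (X t) x0 < rd.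
Proof.
move=> cX step t0 ht0; rewrite ltNge; apply/negP => bad.
set G := [set t | 0 <= t <= T /\ rd <= pdist (X t) x0].
have G0 : G t0 by [].
have lbG : lbound G 0 by move=> t [/andP[]].
have hinf : has_inf G by split; [exists t0 | exists 0].
set tau := inf G.
have tau0 : 0 <= tau by apply: lb_le_inf => //; exists t0.
have tauT : tau <= T.
  apply: le_trans (ge_inf _ G0) _; first by exists 0.
  by case/andP: ht0.
have before : forall u, 0 <= u < tau -> pdist (X u) x0 < rd.
  move=> u /andP[u0 ut]; rewrite ltNge; apply/negP => hu.
  have Gu : G u by split => //; rewrite u0 /= (le_trans (ltW ut)).
  have := ge_inf (ex_intro _ 0 lbG) Gu; rewrite -/tau leNgt ut //.
have at_tau := step tau (introT andP (conj tau0 tauT)) before.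
have eps0 : 0 < rd - pdist (X tau) x0 by rewrite subr_gt0.
have [d d0 H] := within_eps_pt cX tau0 eps0.
have [g Gg gd] := inf_adherent d0 hinf.
have tg : tau <= g := ge_inf (ex_intro _ 0 lbG) Gg.
case: Gg => /andP[g0 gT] gbad.
have := H g g0.
rewrite ler0_norm ?subr_le0 // opprB ltrBlDr addrC => /(_ gd) hg.
have := pdist_triangle (X g) (X tau) x0.
move: gbad hg; lra.
Qed.

Lemma zero_upto {R : realType} (f : R -> R) tau :
  {within nonneg_time, continuous f} -> 0 <= tau -> f 0 = 0 ->
  (forall u, 0 <= u < tau -> f u = 0) -> f tau = 0.
Proof.
move=> cf t0 f0 hf.
case: (eqVneq tau 0) => [->//|tn0].
have tp : 0 < tau by rewrite lt_def tn0 t0.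
apply/eqP; apply: contraT => fn.
have e0 : 0 < `|f tau| by rewrite normr_gt0.
have [d d0 H] := within_eps cf t0 e0.
have d20 : 0 < d / 2 by rewrite divr_gt0.
case: (lerP 0 (tau - d / 2)) => hu.
  have := H (tau - d / 2) hu.
  rewrite opprB addrC subrK ger0_norm ?(ltW d20) // (hf (tau - d / 2)) ?subr0.
    by rewrite ltxx => /(_ ltac:(lra)).
  by rewrite hu /= ltrBlDr ltrDl.
have := H 0 (lexx 0); rewrite subr0 f0 subr0 ltxx ger0_norm ?(ltW tp) //.
by move/(_ ltac:(lra)).
Qed.

Lemma seg_dist' {R : realType} (p q z : @pt R) : seg p q z -> pdist z q <= pdist p q.
Proof.
case=> l; rewrite /= in_itv /= => /andP[l0 l1] <-.
rewrite /pdist.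
have -> : psub (padd p (pscale l (psub q p))) q = pscale (1 - l) (psub p q).
  by rewrite /psub /padd /pscale /=; congr (_, _); ring.
rewrite pnorm_scale ger0_norm ?subr_ge0 //; have := pnorm_ge0 (psub p q); nra.
Qed.

Lemma big_padd_zero {R : realType} (n : nat) (F : nat -> @pt R) :
  (forall j, (j < n)%N -> F j = (0, 0)) -> \big[padd/(0, 0)]_(j < n) F j = (0, 0).
Proof.
move=> hF; elim/big_ind: _ => //.
  by move=> x y -> ->; rewrite /padd /= addr0.
by move=> j _; apply: hF.
Qed.

Lemma big_padd_single {R : realType} (n i : nat) (F : nat -> @pt R) :
  (i < n)%N -> (forall j, (j < n)%N -> j != i -> F j = (0, 0)) ->
  \big[padd/(0, 0)]_(j < n) F j = F i.
Proof.
elim: n i F => [//|n IH] i F iln hF.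
rewrite big_ord_recl /=.
have -> : \big[padd/(0, 0)]_(j < n) F (lift ord0 j) = \big[padd/(0, 0)]_(j < n) F j.+1.
  by apply: eq_bigr => j _; rewrite lift0.
case: i iln hF => [|i] iln hF.
  rewrite (@big_padd_zero _ n (fun j => F j.+1)); first by rewrite /padd /= !addr0; case: (F 0%N).
  by move=> j jn; apply: hF.
rewrite hF // (IH i (fun j => F j.+1)) //; first by rewrite /padd /= !add0r; case: (F i.+1).
by move=> j jn ji; apply: hF.
Qed.

Lemma kappa_ge0 {R : realType} m (c : nat -> R -> @pt R) : 0 <= kappa m c.
Proof.
rewrite /kappa; set K := [set k | _].
case: (pselect (has_sup K)) => h; last by rewrite sup_out.
apply: le_trans (sup_upper_bound h _); last by exists 0%N, 0; split.
by rewrite /ucurv divr_ge0 // exprn_ge0 // sqrtr_ge0.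
Qed.

Lemma lambda_max_ge0 {R : realType} m (lp lm : nat -> R) : 0 <= lambda_max m lp lm.
Proof. exact: bigmax_ge_id. Qed.

Lemma rho_ge0 {R : realType} (D : set (@pt R)) m c : 0 <= rho D m c.
Proof.
rewrite /rho; set S := [set r | _].
case: (pselect (has_sup S)) => h; last by rewrite sup_out.
apply: (sup_upper_bound h); split => // r' x r'0 Dx.
have -> : pball x r' `&` Bunion m c = set0.
  apply/seteqP; split => // z [zb _]; move: zb; rewrite /pball /= => zb.
  have := pnorm_ge0 (psub z x); rewrite /pdist in zb; lra.
exact: connected0.
Qed.

Lemma rd_conn {R : realType} (D : set (@pt R)) m c lp lm delta x :
  0 < r_delta delta (kappa m c) (lambda_max m lp lm) (rho D m c) -> delta < 1 / 2 -> D x ->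
  connected (pball x (r_delta delta (kappa m c) (lambda_max m lp lm) (rho D m c)) `&` Bunion m c).
Proof.
rewrite /r_delta; set M := Num.min _ _; set rh := rho D m c => rd0 dh Dx.
have M0 : 0 <= M.
  rewrite /M !le_min !invr_ge0 kappa_ge0 lambda_max_ge0 /=.
  exact: rho_ge0.
have Mrh : M <= rh by rewrite /M ge_min lexx orbT.
have [d0 Mp] : 0 < delta /\ 0 < M.
  case: (ltrP 0 delta) => hd; case: (ltrP 0 M) => hM //; exfalso; nra.
have rhp : 0 < rh by exact: lt_le_trans Mp Mrh.
have rdrh : delta * M < rh by nra.
set S := [set r | 0 <= r /\ forall r' x, r' <= r -> D x -> connected (pball x r' `&` Bunion m c)].
have hs : has_sup S.
  apply: contrapT => hn; have := sup_out hn; rewrite -/(rho D m c) -/rh => e.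
  by move: rhp; rewrite e ltxx.
have eps0 : 0 < rh - delta * M by rewrite subr_gt0.
have [r [_ Sr] rr] := sup_adherent eps0 hs.
apply: Sr => //; apply: ltW; move: rr; rewrite -/(rho D m c) -/rh.
by rewrite opprB addrC subrK.
Qed.

Unset Implicit Arguments.
Theorem mainTheorem5 (R : realType) (m : nat)
    (D0 D : set (@pt R)) (c : nat -> R -> pt) (nv : nat -> pt -> pt)
    (lp lm : nat -> R)
    (W : R -> pt) (s : nat -> R -> R) (X : R -> pt) (L : nat -> R -> R)
    (x0 y : pt) (alpha beta gamma delta : R) (i : nat) :
  (* the domain D and the barriers B_j = range (c j) *)
  open D0 -> ebounded D0 -> D = closure D0 -> connected D ->
  simply_connected D ->
  (forall j, (j <= m)%N -> smooth_simple_closed_param (c j)) ->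
  bdry D = range (c 0%N) ->
  (forall j, (1 <= j <= m)%N -> range (c j) `<=` D0) ->
  (forall j k, (j <= m)%N -> (k <= m)%N -> j != k ->
     range (c j) `&` range (c k) = set0) ->
  (forall j, (j <= m)%N -> inward_unit_normal (c j) (nv j)) ->
  (* rates *)
  (forall j, (1 <= j <= m)%N -> 0 < lp j /\ 0 < lm j) ->
  (* the driving paths: Wiener path and chain paths *)
  W 0 = (0, 0) -> {within nonneg_time, continuous W} ->
  (forall t, s 0%N t = 1) ->
  (forall j, (1 <= j <= m)%N ->
     [/\ cadlag (s j), (forall t, 0 <= t -> s j t = 1 \/ s j t = -1) &
         s j 0 = (if `[< pos_side (range (c j)) x0 >] then 1 else -1)]) ->
  (* X is the snapping-out Brownian motion started at x0 *)
  X 0 = x0 -> snapping_out m c nv D x0 W s X L ->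
  (* hypotheses of the theorem *)
  let rd := r_delta delta (kappa m c) (lambda_max m lp lm) (rho D m c) in
  0 < alpha -> 0 < beta -> 0 < gamma -> alpha < 1 / 5 - gamma -> delta < 1 / 2 ->
  Ddelta D m c rd x0 -> Ddelta D m c rd y -> pdist x0 y <= 4 / 5 * rd ->
  (1 <= i <= m)%N ->
  (pos_side (range (c i)) x0 /\ neg_side (range (c i)) y \/
   neg_side (range (c i)) x0 /\ pos_side (range (c i)) y) ->
  (* the event A *)
  (E1 (s i) < (alpha * rd)%:E)%E -> ((beta * rd)%:E < E2 (s i))%E ->
  (forall t, 0 <= t <= rd ^+ 2 ->
     pnorm (psub (W t) (pscale (t / rd ^+ 2) (psub y x0))) <= gamma * rd) ->
  exists t, 0 <= t <= rd ^+ 2 /\ s i (L i t) != s i 0.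
Proof.
move=> _ _ _ _ _ Hsm _ _ Hdisj Hnv _ _ _ Hs0 Hs HX0 HSO rd a0 b0 g0 agam dhalf
  Dx0 Dy dxy im Hside HE1 _ HW.
case: HSO => [[cX XD cL] Hi Hii Hiii].
have im' : (i <= m)%N by case/andP: im.
have [cad pm si0] := Hs i im.
have [e [Ee e0 se before]] := E1_props cad pm HE1.
have eard : e < alpha * rd by move: HE1; rewrite Ee lte_fin.
have rd0 : 0 < rd by nra.
set T := rd ^+ 2.
have T0 : 0 <= T by rewrite /T sqr_ge0.
apply: contrapT => Hn.
have Hall : forall t, 0 <= t <= T -> s i (L i t) = s i 0.
  move=> t ht; apply/eqP; apply: contraT => hne; case: Hn; exists t; split => //.
have [homi Li0 Linti] := Hii i im'.
have Li_small : forall t, 0 <= t <= T -> L i t < e.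
  move=> t /andP[t0 tT]; rewrite ltNge; apply/negP => et.
  have cLt : {within `[0, t], continuous L i}.
    apply: (continuous_subspaceW _ (cL i im')) => u; rewrite /= in_itv /= => /andP[].
    by [].
  have [u uin Lu] : exists2 u, u \in `[0, t] & L i u = e.
    apply: (@IVT R (L i) 0 t e t0 cLt).
    by rewrite Li0 (min_l (le_trans e0 et)) (max_r (le_trans e0 et)) e0 et.
  move: uin; rewrite in_itv /= => /andP[u0 ut].
  have := Hall u; rewrite u0 (le_trans ut tT) Lu => /(_ isT) /eqP.
  by rewrite (negbTE se).
case: Dx0 => Dx0D Dx0b; case: Dy => DyD Dyb.
have rd5 : 0 < rd / 5 by rewrite divr_gt0.
have fx0 : forall j z, (j <= m)%N -> pdist z x0 < rd / 5 -> ~ range (c j) z.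
  move=> j z jm hz bz; have := Dx0b z (ex_intro2 _ _ j jm bz).
  by rewrite pdistC leNgt hz.
have fy : forall j z, (j <= m)%N -> pdist z y < rd / 5 -> ~ range (c j) z.
  move=> j z jm hz bz; have := Dyb z (ex_intro2 _ _ j jm bz).
  by rewrite pdistC leNgt hz.
have fx0i := fx0 i; have fyi := fy i.
have Hs2 : (inside (range (c i)) x0 /\ outside (range (c i)) y) \/
           (outside (range (c i)) x0 /\ inside (range (c i)) y).
  case: Hside => [[px ny]|[nx py]]; [left|right]; split.
  - exact: (pos_free_inside rd5 (fun z hz => fx0i z im' hz) px).
  - exact: (neg_free_outside rd5 (fun z hz => fyi z im' hz) ny).
  - exact: (neg_free_outside rd5 (fun z hz => fx0i z im' hz) nx).
  - exact: (pos_free_inside rd5 (fun z hz => fyi z im' hz) py).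
have cross : exists p, pdist p x0 < rd /\ range (c i) p.
  have lt45 : pdist x0 y < rd by apply: le_lt_trans dxy _; lra.
  case: Hs2 => [[ix oy]|[ox iy]].
    have [z sz bz] := crossing ix oy; exists z; split => //.
    by apply: le_lt_trans (seg_dist sz) _; rewrite pdistC.
  have [z sz bz] := crossing iy ox; exists z; split => //.
  by apply: le_lt_trans (seg_dist' sz) _; rewrite pdistC.
have conK := @rd_conn R D m c lp lm delta x0 rd0 dhalf Dx0D.
have noth := no_other_barrier im' (fun j jm => range_closed (Hsm j jm)) Hdisj conK cross.
have Lge0 : forall j r, (j <= m)%N -> 0 <= r -> 0 <= L j r.
  move=> j r jm r0; have [homj Lj0 _] := Hii j jm.
  rewrite -Lj0; apply: homj => //; rewrite inE /nonneg_time //=.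
have gbound : forall j r, (j <= m)%N -> 0 <= r ->
    pnorm (pscale (s j (L j r) * ind (range (c j)) (X r)) (nv j (X r))) <= 1.
  move=> j r jm r0; rewrite pnorm_scale /ind.
  case: asboolP => hr; last by rewrite mulr0 normr0 mul0r.
  case: hr => t' _ ht'.
  have [pn1 _ _] := Hnv j jm t'; rewrite -ht' pn1 mulr1 mulr1.
  case: (posnP j) => [->|jp]; first by rewrite Hs0 normr1.
  have [_ pmj _] := Hs j (introT andP (conj jp jm)).
  by case: (pmj (L j r) (Lge0 j r jm r0)) => ->; rewrite ?normrN normr1.
have pnorm0 : forall v : @pt R, pnorm v <= 0 -> v = (0, 0).
  move=> v hv; have := pnorm_comp1 v; have := pnorm_comp2 v.
  have := pnorm_ge0 v => h0 h2 h1.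
  have e1 : v.1 = 0 by apply/normr0_eq0/eqP; rewrite eq_le normr_ge0 (le_trans h1 hv).
  have e2 : v.2 = 0 by apply/normr0_eq0/eqP; rewrite eq_le normr_ge0 (le_trans h2 hv).
  by move: e1 e2; clear; case: v => a b /= -> ->.
have step : forall t, 0 <= t <= T -> (forall u, 0 <= u < t -> pdist (X u) x0 < rd) ->
    pdist (X t) (padd x0 (W t)) <= L i t.
  move=> t /andP[t0 tT] hu.
  have Lj0 : forall j, (j <= m)%N -> j != i -> L j t = 0.
    move=> j jm ji; have [homj Lj0' Lintj] := Hii j jm.
    apply: (zero_upto (cL j jm) t0 Lj0') => u /andP[u0 ut].
    rewrite (Lintj u u0); apply: LSint_zero => r /andP[r0 ru].
    rewrite /ind; case: asboolP => // hr; exfalso.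
    apply: (noth j (X r) jm ji _ hr); apply: hu; rewrite r0 /=.
    exact: le_lt_trans ru ut.
  rewrite (Hi t t0) (@big_padd_single R m.+1 i (fun j => LSintv (L j) (fun r => pscale (s j (L j r) * ind (range (c j)) (X r)) (nv j (X r))) t)); last 2 first.
  - by rewrite ltnS.
  - move=> j jm ji; apply: pnorm0; rewrite -(Lj0 j _ ji); last by rewrite -ltnS.
    have [homj Lj0' _] := Hii j (jm : (j < m.+1)%N).
    apply: (LSintv_bound (cL j jm) homj Lj0' t0) => r /andP[r0 _].
    exact: gbound.
  have [homi' Li0' _] := Hii i im'.
  have -> : pdist (padd x0 (padd (W t) (LSintv (L i)
      (fun r => pscale (s i (L i r) * ind (range (c i)) (X r)) (nv i (X r))) t))) (padd x0 (W t))
      = pnorm (LSintv (L i)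
      (fun r => pscale (s i (L i r) * ind (range (c i)) (X r)) (nv i (X r))) t).
    by rewrite /pdist /psub /padd /=; congr pnorm; congr (_, _); ring.
  apply: (LSintv_bound (cL i im') homi' Li0' t0) => r /andP[r0 _].
  exact: gbound.
have Tp : 0 < T by rewrite /T exprn_gt0.
have Wb : forall t, 0 <= t <= T -> pnorm (W t) <= gamma * rd + 4 / 5 * rd.
  move=> t ht; have := HW t ht.
  set v := pscale (t / rd ^+ 2) (psub y x0) => hw.
  have -> : W t = padd (psub (W t) v) v.
    by rewrite /padd /psub; case: (W t) => a b /=; congr (_, _); ring.
  apply: le_trans (pnorm_triangle _ _) _; apply: lerD => //.
  rewrite /v pnorm_scale -/T.
  case/andP: ht => t0 tT.
  have q0 : 0 <= t / T by rewrite divr_ge0.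
  have q1 : t / T <= 1 by rewrite ler_pdivrMr // mul1r.
  rewrite ger0_norm //.
  have : pnorm (psub y x0) <= 4 / 5 * rd by rewrite -/(pdist y x0) pdistC.
  have := pnorm_ge0 (psub y x0); nra.
have bound : forall t, 0 <= t <= T -> (forall u, 0 <= u < t -> pdist (X u) x0 < rd) ->
    pdist (X t) x0 < rd.
  move=> t ht hu.
  have s1 := step t ht hu.
  have s2 := Li_small t ht.
  have s3 := Wb t ht.
  have tri := pdist_triangle (X t) (padd x0 (W t)) x0.
  have eqW : pdist (padd x0 (W t)) x0 = pnorm (W t).
    by rewrite /pdist /psub /padd; congr pnorm; case: (W t) => a b /=; congr (_, _); ring.
  rewrite eqW in tri.
  have : alpha * rd + gamma * rd < rd / 5 by nra.
  lra.
have allin := first_exit cX bound.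
have TT : 0 <= T <= T by rewrite T0 lexx.
have sT : pdist (X T) (padd x0 (W T)) <= L i T.
  apply: step => // u /andP[u0 uT]; apply: allin.
  by rewrite u0 ltW.
have WT : pdist (padd x0 (W T)) y <= gamma * rd.
  have := HW T TT; rewrite -/T divff ?gt_eqF //.
  have -> : pdist (padd x0 (W T)) y = pnorm (psub (W T) (pscale 1 (psub y x0))).
    by rewrite /pdist /psub /padd /pscale; congr pnorm; case: (W T) => a b /=; congr (_, _); ring.
  by [].
have LT := Li_small T TT.
have XTy : pdist (X T) y < rd / 5.
  have := pdist_triangle (X T) (padd x0 (W T)) y.
  have : alpha * rd + gamma * rd < rd / 5 by nra.
  lra.
set XT := X T in XTy.
have r'0 : 0 < rd / 5 - pdist XT y by rewrite subr_gt0.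
have fXT : forall z, pdist z XT < rd / 5 - pdist XT y -> ~ range (c i) z.
  move=> z hz; apply: fyi => //; have := pdist_triangle z XT y; lra.
have cy : connected_component (~` range (c i)) y XT.
  exact: (free_ball_comp (fun z hz => fyi z im' hz) XTy).
have [HiiT1 HiiT2] := Hiii i T im' T0.
have sT0 := Hall T TT.
case: Hs2 => [[ix oy]|[ox iy]].
- have px : pos_side (range (c i)) x0 by case: Hside => [[]|[nx _]] //;
    have := neg_free_outside rd5 (fun z hz => fx0i z im' hz) nx => -[_ hb]; case: ix => _.
  move: si0; rewrite asboolT // => si0.
  have := HiiT1 (etrans sT0 si0).
  move/(pos_free_inside r'0 fXT) => [_ bXT].
  case: oy => _; apply; by rewrite (same_connected_component cy).
- have npx : ~ pos_side (range (c i)) x0.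
    move/(pos_free_inside rd5 (fun z hz => fx0i z im' hz)) => [_ hb].
    by case: ox => _.
  move: si0; rewrite asboolF // => si0.
  have := HiiT2 (etrans sT0 si0).
  move/(neg_free_outside r'0 fXT) => [_ bXT].
  case: iy => _ hb; apply: bXT; by rewrite -(same_connected_component cy).
Qed.
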